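(* Let $(\Lambda_i,W_i,\mathscr{M}_i)$, $i=1,2$, be flag order data over a field $\mathbb{K}$, let $\Lambda=\Lambda_1\otimes_{\mathbb{K}}\Lambda_2$ and $\hat W=(W_1\times W_2)\ltimes(\mathscr{M}_1\times\mathscr{M}_2)=\hat W_1\times\hat W_2$ acting factorwise on $\Lambda$. For pairwise distinct $\sigma_1,\dots,\sigma_n\in\hat W$, there exist $a_1,\dots,a_n\in\Lambda$ with $\det\big((\sigma_i(a_j))_{i,j=1}^n\big)\neq0$ such that each $a_j$ is a simple tensor $a_j=b_j\otimes c_j$ with $b_j\in\Lambda_1$, $c_j\in\Lambda_2$.
   Context: Flag order data $(\Lambda,W,\mathscr{M})$: $\Lambda$ a Noetherian integrally closed domain, $W$ a finite subgroup of $\mathrm{Aut}(\Lambda)$, $\mathscr{M}$ a submonoid of $\mathrm{Aut}(\Lambda)$ with $(\mathscr{M}\mathscr{M}^{-1})\cap W=\{1\}$ and $W$ normalizing $\mathscr{M}$; $\hat W_i=W_i\ltimes\mathscr{M}_i$. $\Lambda_1\otimes\Lambda_2$ is assumed to be an integral domain, and $(w_1,w_2)(a\otimes b)=w_1(a)\otimes w_2(b)$. *)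

(* Defs.v *)
From HB Require Import structures.
From mathcomp Require Import all_boot all_order all_algebra.
From mathcomp Require Import fraction.
Set Implicit Arguments. Unset Strict Implicit. Unset Printing Implicit Defensive.
Import GRing.Theory.
Local Open Scope ring_scope.

Definition feq (T U : Type) (f g : T -> U) : Prop := forall x, f x = g x.

Definition is_ideal (R : comNzRingType) (I : R -> Prop) : Prop :=
  I 0 /\ (forall x y, I x -> I y -> I (x + y)) /\ (forall r x, I x -> I (r * x)).

Definition noetherian (R : comNzRingType) : Prop :=
  forall I : nat -> R -> Prop,
    (forall n, is_ideal (I n)) ->
    (forall n x, I n x -> I n.+1 x) ->
    exists N, forall n x, (N <= n)%N -> I n x -> I N x.

Definition integrally_closed (R : idomainType) : Prop :=
  forall x : {fraction R},
    (exists p : {poly R}, p \is monic /\ root (map_poly (@FracField.tofrac R) p) x) ->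
    exists a : R, x = FracField.tofrac a.

(* K-algebra automorphisms of L, where the K-algebra structure is f : K -> L *)
Definition kaut (K : fieldType) (L : comNzRingType) (f : {rmorphism K -> L})
    (s : L -> L) : Prop :=
  (forall x y, s (x + y) = s x + s y) /\ (forall x y, s (x * y) = s x * s y) /\
  s 1 = 1 /\ bijective s /\ (forall k, s (f k) = f k).

(* flag order data (L, W, M) over K; W and M are given as sets of maps L -> L
   (considered up to extensional equality) *)
Definition flag_order_data (K : fieldType) (L : idomainType) (f : {rmorphism K -> L})
    (W M : (L -> L) -> Prop) : Prop :=
  [/\ noetherian L /\ integrally_closed L,
      (* W is a finite subgroup of Aut_K(L) *)
      [/\ (forall w, W w -> kaut f w),
          W id,
          (forall w w', W w -> W w' -> W (w \o w')),
          (forall w, W w -> exists2 w', W w' & (feq (w \o w') id /\ feq (w' \o w) id)) &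
          (exists (N : nat) (s : nat -> L -> L), forall w, W w -> exists2 k, (k < N)%N & feq w (s k))],
      [/\ (forall m, M m -> kaut f m), M id & (forall m m', M m -> M m' -> M (m \o m'))],
      (* (M M^-1) \cap W = {1} *)
      (forall m m' w, M m -> M m' -> W w -> feq m (w \o m') -> feq w id) &
      (forall w m, W w -> M m -> exists2 m', M m' & feq (w \o m) (m' \o w))].

(* (T, i1, i2) is the tensor product T = L1 \otimes_K L2 of the commutative
   K-algebras L1, L2: the coproduct in commutative K-algebras, i.e. the universal
   property of the tensor product of commutative K-algebras. *)
Definition is_tensor_product (K : fieldType) (L1 L2 : comNzRingType)
    (f1 : {rmorphism K -> L1}) (f2 : {rmorphism K -> L2})
    (T : comNzRingType) (i1 : {rmorphism L1 -> T}) (i2 : {rmorphism L2 -> T}) : Prop :=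
  (forall k, i1 (f1 k) = i2 (f2 k)) /\
  forall (B : comNzRingType) (h1 : {rmorphism L1 -> B}) (h2 : {rmorphism L2 -> B}),
    (forall k, h1 (f1 k) = h2 (f2 k)) ->
    (exists h : {rmorphism T -> B}, feq (h \o i1) h1 /\ feq (h \o i2) h2) /\
    (forall h h' : {rmorphism T -> B},
        feq (h \o i1) h1 -> feq (h \o i2) h2 ->
        feq (h' \o i1) h1 -> feq (h' \o i2) h2 -> feq h h').

(* Main.v *)
Require Import Defs.
From HB Require Import structures.
From mathcomp Require Import all_boot all_order all_algebra.
From mathcomp Require Import generic_quotient.
From mathcomp Require Import boolp classical_sets.
From mathcomp Require Import ring.
Import GRing.Theory.
Local Open Scope ring_scope.

Section Functional.
Variables (K : fieldType) (C : comNzRingType) (g : {rmorphism K -> C}).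

Definition subsp (V : C -> Prop) : Prop :=
  (forall x y, V x -> V y -> V (x + y)) /\ (forall k x, V x -> V (g k * x)) /\ ~ V 1.

Lemma exists_functional : exists phi : C -> K,
  (forall x y, phi (x + y) = phi x + phi y) /\ (forall k x, phi (g k * x) = k * phi x) /\ phi 1 = 1.
Proof.
have [A [[Aadd [Ascal A1]] Amax]] : exists A, subsp A /\ forall B, (A `<` B)%classic -> ~ subsp B.
  apply: Zorn_bigcup => F FP Ftot; split; [|split].
  - move=> x y [X FX Xx] [Y FY Yy].
    have [XY|YX] := Ftot X Y FX FY.
    + exists Y => //; have [+ _] := FP Y FY; apply; last by []; exact: XY.
    + exists X => //; have [+ _] := FP X FX; apply; first by []; exact: YX.
  - move=> k x [X FX Xx]; exists X => //; have [_ [+ _]] := FP X FX; exact.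
  - move=> [X FX X1]; have [_ [_]] := FP X FX; exact.
have A0 : A 0.
  apply: contrapT => nA0.
  apply: (Amax (fun y => A y \/ y = 0)); first split.
  - by move=> y Ay; left.
  - by move=> /(_ 0 (or_intror erefl)).
  split; [|split].
  - move=> x y [Ax|->] [Ay|->]; rewrite ?addr0 ?add0r; by [left; apply: (Aadd)|left|left|right].
  - move=> k x [Ax|->]; [left; exact: (Ascal)|right; exact: mulr0].
  - by move=> [//|/eqP]; rewrite oner_eq0.
have uniq k k' x : A (x - g k) -> A (x - g k') -> k = k'.
  move=> h1 h2; apply: contrapT => /eqP; rewrite -subr_eq0 => nz.
  have : A (g ((k - k')^-1) * ((x - g k') - (x - g k))).
    apply: (Ascal); apply: (Aadd) => //.
    have -> : - (x - g k) = g (-1) * (x - g k) by rewrite rmorphN1 mulN1r.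
    exact: (Ascal).
  have -> : x - g k' - (x - g k) = g (k - k').
    by rewrite rmorphB opprB addrC addrA subrK.
  by rewrite -rmorphM mulVf // rmorph1.
have ex x : exists k, A (x - g k).
  apply: contrapT => nex.
  have nAx : ~ A x by move=> Ax; apply: nex; exists 0; rewrite rmorph0 subr0.
  pose B y := exists c v, A v /\ y = v + g c * x.
  apply: (Amax B); first split.
  - by move=> y Ay; exists 0, y; split => //; rewrite rmorph0 mul0r addr0.
  - move=> BA; apply: nAx; apply: BA; exists 1, 0; split => //.
    by rewrite rmorph1 mul1r add0r.
  split; [|split].
  - move=> _ _ [c [v [Av ->]]] [c' [v' [Av' ->]]].
    exists (c + c'), (v + v'); split; first exact: (Aadd).
    by rewrite rmorphD mulrDl addrACA.
  - move=> k _ [c [v [Av ->]]]; exists (k * c), (g k * v); split; first exact: (Ascal).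
    by rewrite mulrDr rmorphM mulrA.
  - move=> [c [v [Av e]]].
    have [c0|cn0] := eqVneq c 0.
      by move: e; rewrite c0 rmorph0 mul0r addr0 => e; apply: A1; rewrite e.
    apply: nex; exists c^-1.
    have -> : x - g c^-1 = g (- c^-1) * v.
      have : g c^-1 * 1 = g c^-1 * v + g c^-1 * g c * x by rewrite e mulrDr mulrA.
      rewrite -rmorphM mulVf // rmorph1 mul1r mulr1 => ->.
      by rewrite rmorphN mulNr opprD addrCA subrr addr0.
    exact: (Ascal).
pose phi x := proj1_sig (cid (ex x)).
have phiP x : A (x - g (phi x)) by rewrite /phi; case: cid.
exists phi; split; [|split].
- move=> x y; apply: (uniq _ _ (x + y)) => //.
  have -> : x + y - g (phi x + phi y) = (x - g (phi x)) + (y - g (phi y)).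
    by rewrite rmorphD opprD addrACA.
  exact: (Aadd).
- move=> k x; apply: (uniq _ _ (g k * x)) => //.
  by rewrite rmorphM -mulrBr; exact: (Ascal).
- by apply: (uniq _ _ 1) => //; rewrite rmorph1 subrr.
Qed.
End Functional.

Section Tensor.
Local Open Scope quotient_scope.
Variables (K : fieldType) (A C : comNzRingType).
Variables (f : {rmorphism K -> A}) (g : {rmorphism K -> C}).
Variable phi0 : C -> K.
Hypothesis phi0D : forall x y, phi0 (x + y) = phi0 x + phi0 y.
Hypothesis phi0Z : forall k x, phi0 (g k * x) = k * phi0 x.
Hypothesis phi01 : phi0 1 = 1.

Definition Lin (phi : C -> K) : Prop :=
  (forall x y, phi (x + y) = phi x + phi y) /\ (forall k x, phi (g k * x) = k * phi x).

Definition ev (phi : C -> K) (u : seq (A * C)) : A := \sum_(p <- u) p.1 * f (phi p.2).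

Definition tequiv (u v : seq (A * C)) : bool := `[< forall phi, Lin phi -> ev phi u = ev phi v >].

Lemma tequivP u v : reflect (forall phi, Lin phi -> ev phi u = ev phi v) (tequiv u v).
Proof. exact: asboolP. Qed.

Lemma tequiv_refl : reflexive tequiv.
Proof. by move=> u; apply/tequivP. Qed.
Lemma tequiv_sym : symmetric tequiv.
Proof.
by move=> u v; apply/tequivP/tequivP => h phi lp; rewrite h.
Qed.
Lemma tequiv_trans : transitive tequiv.
Proof.
by move=> v u w /tequivP h1 /tequivP h2; apply/tequivP => phi lp; rewrite h1 // h2.
Qed.

Canonical tequiv_equiv := EquivRel tequiv tequiv_refl tequiv_sym tequiv_trans.

Definition TT := {eq_quot tequiv}.
HB.instance Definition _ : EqQuotient _ tequiv TT := EqQuotient.on TT.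
HB.instance Definition _ := Choice.on TT.

Lemma piP' u v : reflect (\pi_TT u = \pi_TT v) (tequiv u v).
Proof. exact: eqmodP. Qed.

Lemma piEv u v : (forall phi, Lin phi -> ev phi u = ev phi v) -> \pi_TT u = \pi_TT v.
Proof. by move=> h; apply/piP'/tequivP. Qed.

Lemma repr_ev u phi : Lin phi -> ev phi (repr (\pi_TT u)) = ev phi u.
Proof.
move=> lp; have : tequiv (repr (\pi_TT u)) u by apply/piP'; rewrite reprK.
by move/tequivP/(_ phi lp).
Qed.

Definition addS (u v : seq (A * C)) := u ++ v.
Definition oppS (u : seq (A * C)) := [seq (- p.1, p.2) | p <- u].
Definition mulS (u v : seq (A * C)) := [seq (p.1 * q.1, p.2 * q.2) | p <- u, q <- v].
Definition oneS : seq (A * C) := [:: (1, 1)].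

Lemma ev_add phi u v : ev phi (addS u v) = ev phi u + ev phi v.
Proof. by rewrite /ev big_cat. Qed.
Lemma ev_opp phi u : ev phi (oppS u) = - ev phi u.
Proof. by rewrite /ev big_map -sumrN; apply: eq_bigr => p _; rewrite mulNr. Qed.
Lemma ev_mul phi u v : ev phi (mulS u v) =
  \sum_(p <- u) \sum_(q <- v) p.1 * q.1 * f (phi (p.2 * q.2)).
Proof. by rewrite /ev big_allpairs_dep. Qed.
Lemma ev_nil phi : ev phi [::] = 0.
Proof. by rewrite /ev big_nil. Qed.

Lemma Lin_r phi y : Lin phi -> Lin (fun x => phi (x * y)).
Proof.
move=> [h1 h2]; split=> [x z|k x]; first by rewrite mulrDl h1.
by rewrite -mulrA h2.
Qed.
Lemma Lin_l phi y : Lin phi -> Lin (fun x => phi (y * x)).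
Proof.
move=> [h1 h2]; split=> [x z|k x]; first by rewrite mulrDr h1.
by rewrite mulrCA h2.
Qed.

Lemma ev_mul_l phi u v : ev phi (mulS u v) =
  \sum_(q <- v) q.1 * ev (fun x => phi (x * q.2)) u.
Proof.
rewrite ev_mul exchange_big /=; apply: eq_bigr => q _.
rewrite /ev mulr_sumr; apply: eq_bigr => p _.
by rewrite mulrCA mulrA.
Qed.
Lemma ev_mul_r phi u v : ev phi (mulS u v) =
  \sum_(p <- u) p.1 * ev (fun x => phi (p.2 * x)) v.
Proof.
rewrite ev_mul; apply: eq_bigr => p _.
by rewrite /ev mulr_sumr; apply: eq_bigr => q _; rewrite mulrA.
Qed.

Definition tadd := lift_op2 TT addS.
Lemma pi_tadd : {morph \pi_TT : x y / addS x y >-> tadd x y}.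
Proof.
move=> x y; unlock tadd; apply: piEv => phi lp.
by rewrite !ev_add !repr_ev.
Qed.
Canonical pi_tadd_morph := PiMorph2 pi_tadd.

Definition topp := lift_op1 TT oppS.
Lemma pi_topp : {morph \pi_TT : x / oppS x >-> topp x}.
Proof.
move=> x; unlock topp; apply: piEv => phi lp.
by rewrite !ev_opp !repr_ev.
Qed.
Canonical pi_topp_morph := PiMorph1 pi_topp.

Lemma mulS_compat u u' v v' :
  (forall phi, Lin phi -> ev phi u = ev phi u') ->
  (forall phi, Lin phi -> ev phi v = ev phi v') ->
  forall phi, Lin phi -> ev phi (mulS u v) = ev phi (mulS u' v').
Proof.
move=> hu hv phi lp; rewrite ev_mul_l.
transitivity (\sum_(q <- v) q.1 * ev (fun x0 => phi (x0 * q.2)) u').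
  by apply: eq_bigr => q _; rewrite hu //; exact: Lin_r.
rewrite -ev_mul_l ev_mul_r [RHS]ev_mul_r.
by apply: eq_bigr => q _; rewrite hv //; exact: Lin_l.
Qed.

Definition tmul := lift_op2 TT mulS.
Lemma pi_tmul : {morph \pi_TT : x y / mulS x y >-> tmul x y}.
Proof.
move=> x y; unlock tmul; apply: piEv; apply: mulS_compat => phi lp;
by rewrite repr_ev.
Qed.
Canonical pi_tmul_morph := PiMorph2 pi_tmul.

Definition tzero := lift_cst TT [::].
Canonical tzero_morph := PiConst tzero.
Definition tone := lift_cst TT oneS.
Canonical tone_morph := PiConst tone.

Lemma taddA : associative tadd.
Proof.
elim/quotW=> x; elim/quotW=> y; elim/quotW=> z; rewrite !piE.
by rewrite /addS catA.
Qed.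
Lemma taddC : commutative tadd.
Proof.
elim/quotW=> x; elim/quotW=> y; rewrite !piE; apply: piEv => phi _.
by rewrite !ev_add addrC.
Qed.
Lemma tadd0 : left_id tzero tadd.
Proof. by elim/quotW=> x; rewrite !piE. Qed.
Lemma taddN : left_inverse tzero topp tadd.
Proof.
elim/quotW=> x; rewrite !piE; apply: piEv => phi _.
by rewrite ev_add ev_opp addNr ev_nil.
Qed.

HB.instance Definition _ := GRing.isZmodule.Build TT taddA taddC tadd0 taddN.

Lemma tmulA : associative tmul.
Proof.
elim/quotW=> x; elim/quotW=> y; elim/quotW=> z; rewrite !piE; apply: piEv => phi _.
rewrite !ev_mul /mulS !big_allpairs_dep /=.
apply: eq_bigr => p _; rewrite big_allpairs_dep; apply: eq_bigr => q _; apply: eq_bigr => r _.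
by rewrite !mulrA.
Qed.
Lemma tmulC : commutative tmul.
Proof.
elim/quotW=> x; elim/quotW=> y; rewrite !piE; apply: piEv => phi _.
rewrite !ev_mul exchange_big; apply: eq_bigr => p _; apply: eq_bigr => q _.
by rewrite [q.1 * _]mulrC [q.2 * _]mulrC.
Qed.
Lemma tmul1 : left_id tone tmul.
Proof.
elim/quotW=> x; rewrite !piE; apply: piEv => phi _.
rewrite ev_mul big_cons big_nil addr0 /ev; apply: eq_bigr => q _.
by rewrite !mul1r.
Qed.
Lemma tmulDl : left_distributive tmul tadd.
Proof.
elim/quotW=> x; elim/quotW=> y; elim/quotW=> z; rewrite !piE; apply: piEv => phi _.
by rewrite !(ev_mul, ev_add) /addS big_cat.
Qed.
Lemma tone_neq0 : tone != tzero.
Proof.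
rewrite !piE; apply/negP => /tequivP /(_ phi0 (conj phi0D phi0Z)).
rewrite ev_nil /ev big_cons big_nil addr0 phi01 rmorph1 mulr1 => /eqP.
by rewrite oner_eq0.
Qed.

HB.instance Definition _ := GRing.Zmodule_isComNzRing.Build TT tmulA tmulC tmul1 tmulDl tone_neq0.


Lemma Lin0 phi : Lin phi -> phi 0 = 0.
Proof.
move=> [h _]; have := h 0 0; rewrite addr0 => /eqP.
by rewrite -subr_eq subrr eq_sym => /eqP.
Qed.

Definition hA (a : A) : TT := \pi_TT [:: (a, 1)].
Definition hC (x : C) : TT := \pi_TT [:: (1, x)].

Lemma ev1 phi a x : ev phi [:: (a, x)] = a * f (phi x).
Proof. by rewrite /ev big_cons big_nil addr0. Qed.

Lemma hA0 : hA 0 = 0.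
Proof.
change (hA 0 = tzero); rewrite /hA !piE; apply: piEv => phi _.
by rewrite ev1 ev_nil mul0r.
Qed.
Lemma hAD : {morph hA : x y / x + y}.
Proof.
move=> x y; change (hA (x + y) = tadd (hA x) (hA y)); rewrite /hA !piE.
apply: piEv => phi _; by rewrite ev_add !ev1 mulrDl.
Qed.
Lemma hA1 : hA 1 = 1.
Proof. by change (hA 1 = tone); rewrite /hA !piE. Qed.
Lemma hAM : {morph hA : x y / x * y}.
Proof.
move=> x y; change (hA (x * y) = tmul (hA x) (hA y)); rewrite /hA !piE.
apply: piEv => phi _; by rewrite ev_mul !big_cons !big_nil !addr0 ev1 mulr1.
Qed.
HB.instance Definition _ := GRing.isNmodMorphism.Build A TT hA (hA0, hAD).
HB.instance Definition _ := GRing.isMonoidMorphism.Build A TT hA (hA1, hAM).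

Lemma hC0 : hC 0 = 0.
Proof.
change (hC 0 = tzero); rewrite /hC !piE; apply: piEv => phi lp.
by rewrite ev1 ev_nil Lin0 // rmorph0 mulr0.
Qed.
Lemma hCD : {morph hC : x y / x + y}.
Proof.
move=> x y; change (hC (x + y) = tadd (hC x) (hC y)); rewrite /hC !piE.
apply: piEv => phi [lp _]; by rewrite ev_add !ev1 lp rmorphD !mul1r.
Qed.
Lemma hC1 : hC 1 = 1.
Proof. by change (hC 1 = tone); rewrite /hC !piE. Qed.
Lemma hCM : {morph hC : x y / x * y}.
Proof.
move=> x y; change (hC (x * y) = tmul (hC x) (hC y)); rewrite /hC !piE.
apply: piEv => phi _; by rewrite ev_mul !big_cons !big_nil !addr0 ev1 mulr1.
Qed.
HB.instance Definition _ := GRing.isNmodMorphism.Build C TT hC (hC0, hCD).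
HB.instance Definition _ := GRing.isMonoidMorphism.Build C TT hC (hC1, hCM).

Lemma hAC k : hA (f k) = hC (g k).
Proof.
rewrite /hA /hC; apply: piEv => phi [_ lp].
by rewrite !ev1 -[g k]mulr1 lp rmorphM mul1r.
Qed.

Lemma hA_inj : injective hA.
Proof.
move=> x y e; apply/eqP; rewrite -subr_eq0; apply/eqP.
have : hA (x - y) = 0 by rewrite raddfB /= e subrr.
change (hA (x - y) = tzero -> x - y = 0); rewrite /hA !piE => /piP' /tequivP.
move=> /(_ phi0 (conj phi0D phi0Z)); by rewrite ev1 ev_nil phi01 rmorph1 mulr1.
Qed.

Lemma tensor_inj1 (L : comNzRingType) (i1 : {rmorphism A -> L}) (i2 : {rmorphism C -> L}) :
  is_tensor_product f g i1 i2 -> injective i1.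
Proof.
move=> [_ H]; have [[h [e1 _]] _] := H TT hA hC hAC.
by move=> x y e; apply: hA_inj; rewrite -!e1 /= e.
Qed.

Lemma tensor_inj2 (L : comNzRingType) (i2 : {rmorphism A -> L}) (i1 : {rmorphism C -> L}) :
  is_tensor_product g f i1 i2 -> injective i2.
Proof.
move=> [_ H]; have [[h [_ e2]] _] := H TT hC hA (fun k => esym (hAC k)).
by move=> x y e; apply: hA_inj; rewrite -!e2 /= e.
Qed.

End Tensor.

Lemma eq_sym_neq {T : eqType} {a b : T} : a != b -> b != a.
Proof. by rewrite eq_sym. Qed.

Section Artin.
Variables (G : Type) (mul : G -> G -> G) (one : G) (R : idomainType).

Lemma artin_indep n (chi : 'I_n -> G -> R) :
  (forall i x y, chi i (mul x y) = chi i x * chi i y) -> (forall i, chi i one = 1) ->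
  (forall i j, i != j -> exists x, chi i x != chi j x) ->
  forall c : 'I_n -> R, (forall x, \sum_i c i * chi i x = 0) -> forall i, c i = 0.
Proof.
elim: n chi => [|n IH] chi chiM chi1 chid c hc i; first by case: i.
pose chi' (j : 'I_n) := chi (lift ord_max j).
have small : forall j : 'I_n, c (lift ord_max j) = 0.
  move=> j.
  have [y hy] := chid (lift ord_max j) ord_max (eq_sym_neq (neq_lift ord_max j)).
  pose c' (k : 'I_n) := c (lift ord_max k) * (chi (lift ord_max k) y - chi ord_max y).
  have chid' : forall a b : 'I_n, a != b -> exists x, chi' a x != chi' b x.
    by move=> a b ab; apply: chid; rewrite (inj_eq (@lift_inj _ _)).
  have hc' : forall x, \sum_k c' k * chi' k x = 0.
    move=> x.
    have e1 := hc (mul y x); have e2 := hc x.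
    rewrite big_ord_recr /= in e1; rewrite big_ord_recr /= in e2.
    have : \sum_(k < n) c (widen_ord (leqnSn n) k) * chi (widen_ord (leqnSn n) k) (mul y x)
       - chi ord_max y * \sum_(k < n) c (widen_ord (leqnSn n) k) * chi (widen_ord (leqnSn n) k) x = 0.
      apply/eqP; rewrite subr_eq0; apply/eqP.
      move/eqP: e1; rewrite addr_eq0 => /eqP ->.
      move/eqP: e2; rewrite addr_eq0 => /eqP ->.
      by rewrite chiM mulrN mulrCA mulrA.
    rewrite mulr_sumr -sumrB => h; apply: (etrans _ h); apply: eq_bigr => k _.
    rewrite /c' /chi'.
    have -> : lift ord_max k = widen_ord (leqnSn n) k by apply: val_inj; rewrite /= /bump leqNgt ltn_ord.
    rewrite chiM; ring.
  have := IH chi' (fun k => chiM _) (fun k => chi1 _) chid' c' hc' j.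
  rewrite /c' => /eqP; rewrite mulf_eq0 subr_eq0 (negbTE hy) orbF => /eqP //.
have [->|ne] := eqVneq i ord_max; last first.
  have [j ->] : exists j, i = lift ord_max j.
    have lt : (i < n)%N.
      have := ltn_ord i; rewrite ltnS leq_eqVlt => /orP [/eqP h|//].
      by case/eqP: ne; apply: val_inj.
    by exists (Ordinal lt); apply: val_inj; rewrite /= /bump leqNgt lt.
  exact: small.
have := hc one; rewrite big_ord_recr /= chi1 mulr1 big1 ?add0r //.
move=> k _.
have -> : widen_ord (leqnSn n) k = lift ord_max k by apply: val_inj; rewrite /= /bump leqNgt ltn_ord.
by rewrite small mul0r.
Qed.


Lemma artin_det n (chi : 'I_n -> G -> R) :
  (forall i x y, chi i (mul x y) = chi i x * chi i y) -> (forall i, chi i one = 1) ->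
  (forall i j, i != j -> exists x, chi i x != chi j x) ->
  exists p : 'I_n -> G, \det (\matrix_(i, j) chi i (p j)) != 0.
Proof.
elim: n chi => [|n IH] chi chiM chi1 chid.
  by exists (fun _ => one); rewrite det_mx00 oner_eq0.
pose chi' (j : 'I_n) := chi (lift ord_max j).
have chid' : forall a b : 'I_n, a != b -> exists x, chi' a x != chi' b x.
  by move=> a b ab; apply: chid; rewrite (inj_eq (@lift_inj _ _)).
have [p' hp'] := IH chi' (fun k => chiM _) (fun k => chi1 _) chid'.
pose p x (j : 'I_n.+1) := if unlift ord_max j is Some j' then p' j' else x.
pose M x := \matrix_(i, j) chi i (p x j).
have colE x : col' ord_max (M x) = col' ord_max (M one).
  by apply/matrixP => a b; rewrite !mxE /p liftK.
pose c i := cofactor (M one) i ord_max.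
have detE x : \det (M x) = \sum_i c i * chi i x.
  rewrite (expand_det_col _ ord_max); apply: eq_bigr => i _.
  by rewrite /c /cofactor colE mxE /p unlift_none mulrC.
have cmax : c ord_max != 0.
  rewrite /c /cofactor mulf_neq0 //; first by rewrite expf_neq0 // oppr_eq0 oner_eq0.
  suff -> : row' ord_max (col' ord_max (M one)) = \matrix_(i, j) chi' i (p' j) by [].
  by apply/matrixP => a b; rewrite !mxE /p liftK.
apply: contrapT => hn.
have all0 x : \sum_i c i * chi i x = 0.
  rewrite -detE; apply/eqP; apply: contrapT => hx; apply: hn; exists (p x); exact/negP.
by rewrite (@artin_indep n.+1 chi chiM chi1 chid c all0 ord_max) eqxx in cmax.
Qed.

End Artin.

Lemma decomp (K : fieldType) (L : idomainType) (f : {rmorphism K -> L}) W M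
  (hD : flag_order_data f W M) w m w' m' :
  W w -> M m -> W w' -> M m' -> feq (w \o m) (w' \o m') -> feq w w' /\ feq m m'.
Proof.
case: hD => _ [_ _ Wcomp Winv _] _ hMW _ Ww Mm Ww' Mm' e.
have [v Wv [e1 e2]] := Winv w' Ww'.
have Wu : W (v \o w) by apply: Wcomp.
have hu : feq m' ((v \o w) \o m).
  by move=> x /=; have := e x => /= ->; symmetry; exact: (e2 (m' x)).
have uid := hMW m' m _ Mm' Mm Wu hu.
have ww : feq w w'.
  move=> x; transitivity (w' (v (w x))); first by symmetry; exact: (e1 (w x)).
  by have := uid x => /= ->.
split => // x; rewrite hu /=; have := uid (m x); exact.
Qed.

Theorem mainTheorem6
  (K : fieldType)
  (L1 L2 : idomainType) (f1 : {rmorphism K -> L1}) (f2 : {rmorphism K -> L2})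
  (W1 M1 : (L1 -> L1) -> Prop) (W2 M2 : (L2 -> L2) -> Prop)
  (hD1 : flag_order_data f1 W1 M1) (hD2 : flag_order_data f2 W2 M2)
  (L : idomainType) (i1 : {rmorphism L1 -> L}) (i2 : {rmorphism L2 -> L})
  (hT : is_tensor_product f1 f2 i1 i2)
  (n : nat)
  (* sigma_i = ((w1 i, m1 i), (w2 i, m2 i)) in (W1 x| M1) x (W2 x| M2) *)
  (w1 m1 : 'I_n -> L1 -> L1) (w2 m2 : 'I_n -> L2 -> L2)
  (hw1 : forall i, W1 (w1 i)) (hm1 : forall i, M1 (m1 i))
  (hw2 : forall i, W2 (w2 i)) (hm2 : forall i, M2 (m2 i))
  (hdist : forall i j : 'I_n, i != j ->
     ~ (feq (w1 i) (w1 j) /\ feq (m1 i) (m1 j) /\ feq (w2 i) (w2 j) /\ feq (m2 i) (m2 j))) :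
  (* a_j = b_j (x) c_j = i1 b_j * i2 c_j, and sigma_i (b (x) c) = w1(m1 b) (x) w2(m2 c) *)
  exists (b : 'I_n -> L1) (c : 'I_n -> L2),
    \det (\matrix_(i < n, j < n) (i1 (w1 i (m1 i (b j))) * i2 (w2 i (m2 i (c j))))) != 0.
Proof.
have [phi2 [p2D [p2Z p21]]] := @exists_functional _ _ f2.
have [phi1 [p1D [p1Z p11]]] := @exists_functional _ _ f1.
have inj1 : injective i1 := @tensor_inj1 _ _ _ _ _ phi2 p2D p2Z p21 _ _ _ hT.
have inj2 : injective i2 := @tensor_inj2 _ _ _ _ _ phi1 p1D p1Z p11 _ _ _ hT.
case: (hD1) => _ [hW1 _ _ _ _] [hM1 _ _] _ _.
case: (hD2) => _ [hW2 _ _ _ _] [hM2 _ _] _ _.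
pose chi (i : 'I_n) (bc : L1 * L2) :=
  i1 (w1 i (m1 i bc.1)) * i2 (w2 i (m2 i bc.2)).
pose mul (p q : L1 * L2) := (p.1 * q.1, p.2 * q.2).
have chiM : forall i x y, chi i (mul x y) = chi i x * chi i y.
  move=> i [x1 x2] [y1 y2]; rewrite /chi /mul /=.
  have [_ [hM1m _]] := hM1 _ (hm1 i); have [_ [W1m _]] := hW1 _ (hw1 i).
  have [_ [hM2m _]] := hM2 _ (hm2 i); have [_ [W2m _]] := hW2 _ (hw2 i).
  by rewrite hM1m W1m hM2m W2m !rmorphM mulrACA.
have chi1 : forall i, chi i (1, 1) = 1.
  move=> i; rewrite /chi /=.
  have [_ [_ [hM1m _]]] := hM1 _ (hm1 i); have [_ [_ [W1m _]]] := hW1 _ (hw1 i).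
  have [_ [_ [hM2m _]]] := hM2 _ (hm2 i); have [_ [_ [W2m _]]] := hW2 _ (hw2 i).
  by rewrite hM1m W1m hM2m W2m !rmorph1 mulr1.
have chid : forall i j, i != j -> exists x, chi i x != chi j x.
  move=> i j ij; apply: contrapT => hn.
  have heq x : chi i x = chi j x.
    by apply/eqP; apply: contrapT => hx; apply: hn; exists x; apply/negP.
  have [_ [_ [M1i _]]] := hM1 _ (hm1 i); have [_ [_ [W1i _]]] := hW1 _ (hw1 i).
  have [_ [_ [M2i _]]] := hM2 _ (hm2 i); have [_ [_ [W2i _]]] := hW2 _ (hw2 i).
  have [_ [_ [M1j _]]] := hM1 _ (hm1 j); have [_ [_ [W1j _]]] := hW1 _ (hw1 j).
  have [_ [_ [M2j _]]] := hM2 _ (hm2 j); have [_ [_ [W2j _]]] := hW2 _ (hw2 j).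
  have e1 : feq (w1 i \o m1 i) (w1 j \o m1 j).
    move=> b; apply: inj1; have := heq (b, 1); rewrite /chi /=.
    by rewrite M2i W2i M2j W2j rmorph1 !mulr1.
  have e2 : feq (w2 i \o m2 i) (w2 j \o m2 j).
    move=> c; apply: inj2; have := heq (1, c); rewrite /chi /=.
    by rewrite M1i W1i M1j W1j rmorph1 !mul1r.
  have [a1 b1] := @decomp _ _ _ _ _ hD1 _ _ _ _ (hw1 i) (hm1 i) (hw1 j) (hm1 j) e1.
  have [a2 b2] := @decomp _ _ _ _ _ hD2 _ _ _ _ (hw2 i) (hm2 i) (hw2 j) (hm2 j) e2.
  exact: (hdist i j ij).
have [p hp] := @artin_det _ mul (1, 1) _ _ chi chiM chi1 chid.
by exists (fun j => (p j).1), (fun j => (p j).2).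
Qed.
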